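(* Let $T,\nu,M_t$ be integers with $M_t\ge1$, $\nu\ge0$, and $T>(\nu+1)M_t$; let $\alpha$ be a primitive element of $\mathbb{F}_{2^T}$ and fix $\mathbf{c}\in\mathbb{F}_{2^T}^{M_t\times1}$. If $\mathbf{g}^{(1)},\dots,\mathbf{g}^{(d)}\in\mathcal{G}$ are such that $\Phi(\mathbf{g}^{(1)}),\dots,\Phi(\mathbf{g}^{(d)})$ are linearly independent over $\mathbb{F}_2$, then $\mathbf{g}^{(1)},\dots,\mathbf{g}^{(d)}$ are linearly independent over $\mathbb{F}_{2^T}$.
   Context: $\Gamma=\{\sum_{t=0}^{\nu}\delta_t\alpha^t:\delta_t\in\mathbb{F}_2\}\subseteq\mathbb{F}_{2^T}$. For $\mathbf{g}=[g_0,\dots,g_{M_t-1}]\in\Gamma^{1\times M_t}$ with $g_k=\sum_{j=0}^{\nu}\delta_{k,j}\alpha^j$, $\Phi(\mathbf{g})=[\delta_{0,0},\dots,\delta_{M_t-1,0}]\in\mathbb{F}_2^{1\times M_t}$. $\mathcal{G}=\{\mathbf{g}\in\Gamma^{1\times M_t}:\mathbf{g}\mathbf{c}=0\}$. *)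

(* Defs.v *)
From HB Require Import structures.
From mathcomp Require Import all_boot all_order all_algebra all_field.
Set Implicit Arguments. Unset Strict Implicit. Unset Printing Implicit Defensive.
Import GRing.Theory.
Local Open Scope ring_scope.

Definition gamma_elt (F : fieldType) (alpha : F) (nu : nat)
  (delta : 'I_nu.+1 -> 'F_2) : F :=
  \sum_(t < nu.+1) (val (delta t))%:R * alpha ^+ t.

Definition gvec (F : fieldType) (alpha : F) (nu Mt : nat)
  (delta : 'I_Mt -> 'I_nu.+1 -> 'F_2) : 'rV[F]_Mt :=
  \row_k gamma_elt alpha (delta k).

Definition Phi (nu Mt : nat) (delta : 'I_Mt -> 'I_nu.+1 -> 'F_2) : 'rV['F_2]_Mt :=
  \row_k delta k ord0.

(* Main.v *)
Require Import Defs.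
From HB Require Import structures.
From mathcomp Require Import all_boot all_order all_algebra all_field zify.
From mathcomp Require Import fingroup perm.
Set Implicit Arguments. Unset Strict Implicit. Unset Printing Implicit Defensive.
Import GRing.Theory.
Local Open Scope ring_scope.

Section Phi2.
Variables (F : fieldType) (h2 : 2 \in [pchar F]).
Definition phi2 (h : 2 \in [pchar F]) (x : 'F_2) : F := (val x)%:R.
Lemma two0 : (2%:R : F) = 0. Proof. exact: pcharf0 h2. Qed.
Lemma phi2_sub : {morph phi2 h2 : x y / x - y}.
Proof.
have h: (1 : F) + 1 = 0 by rewrite -two0.
move=> [[|[|//]] ?] [[|[|//]] ?]; rewrite /phi2 /= ?subr0 ?subrr //.
rewrite (_ : (Zp_trunc (pdiv 2)).+2 = 2%N) //=.
by rewrite sub0r -[RHS]add0r -h addrK.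
Qed.
Lemma phi2_mul : {morph phi2 h2 : x y / x * y}.
Proof.
move=> [[|[|//]] ?] [[|[|//]] ?]; by rewrite /phi2 /= ?mul0r ?mulr0 ?mul1r.
Qed.
HB.instance Definition _ := GRing.isZmodMorphism.Build 'F_2 F (phi2 h2) phi2_sub.
HB.instance Definition _ := GRing.isMonoidMorphism.Build 'F_2 F (phi2 h2) (erefl, phi2_mul).
End Phi2.

Lemma no_small_root (F : finFieldType) (h2 : 2 \in [pchar F]) (T : nat)
  (alpha : F) (halpha : (2 ^ T - 1)%N.-primitive_root alpha)
  (q : {poly 'F_2}) : q != 0 -> (map_poly (phi2 h2) q).[alpha] = 0 ->
  (T < size q)%N.
Proof.
move=> qn0 qa.
set m := (size q).-1.
pose h (b : {ffun 'I_m -> 'F_2}) := \sum_(i < m) phi2 h2 (b i) * alpha ^+ i.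
pose Im := [set h b | b in [set: {ffun 'I_m -> 'F_2}]].
have sq : size q = m.+1 by rewrite /m prednK // lt0n size_poly_eq0.
have powI n : alpha ^+ n \in Im.
  set r := 'X^n %% q.
  have sr : (size r <= m)%N by rewrite -ltnS -sq ltn_modp.
  have -> : alpha ^+ n = (map_poly (phi2 h2) r).[alpha].
    rewrite -[alpha ^+ n](hornerXn alpha n) -(map_polyXn (phi2 h2)).
    by rewrite (divp_eq 'X^n q) rmorphD rmorphM /= hornerD hornerM qa mulr0 add0r.
  have sr' : (size (map_poly (phi2 h2) r) <= m)%N by rewrite size_map_poly.
  rewrite (horner_coef_wide _ sr').
  apply/imsetP; exists [ffun i : 'I_m => r`_i]; first by rewrite inE.
  by rewrite /h; apply: eq_bigr => i _; rewrite ffunE coef_map.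
have zI : 0 \in Im.
  apply/imsetP; exists [ffun => 0]; first by rewrite inE.
  by rewrite /h big1 // => i _; rewrite ffunE rmorph0 mul0r.
pose S := [set alpha ^+ (val i) | i : 'I_(2 ^ T - 1)].
have n0 := prim_order_gt0 halpha.
have a0 : alpha != 0.
  apply/eqP => a0; move: (prim_expr_order halpha); rewrite a0 expr0n.
  by rewrite -(prednK n0) /= => /eqP; rewrite eq_sym oner_eq0.
have cS : #|S| = (2 ^ T - 1)%N.
  rewrite card_imset ?card_ord // => i j /eqP.
  rewrite (eq_prim_root_expr halpha) !modn_small ?ltn_ord // => /eqP; exact: val_inj.
have S0 : 0 \notin S.
  by apply/imsetP => -[i _ /esym/eqP]; rewrite expf_eq0 (negPf a0) andbF.
have sub : 0 |: S \subset Im.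
  apply/subsetP => x; rewrite in_setU1 => /orP[/eqP -> //|/imsetP[i _ ->]].
  exact: powI.
have := subset_leq_card sub; rewrite cardsU1 S0 cS.
have := leq_imset_card h [set: {ffun 'I_m -> 'F_2}].
rewrite cardsT card_ffun card_Fp // card_ord => le1 le2.
have le3 := leq_trans le2 le1.
have : (2 ^ T <= 2 ^ m)%N.
  by move: le3; rewrite add1n subn1 prednK // expn_gt0.
rewrite leq_exp2l // sq ltnS.
by [].
Qed.
Lemma size_det_bound (R : idomainType) n k (Q : 'M[{poly R}]_n) :
  (forall i j, size (Q i j) <= k.+1)%N -> (size (\det Q) <= n * k + 1)%N.
Proof.
move=> hQ; apply: leq_trans (size_sum _ _ _) _.
apply/bigmax_leqP => s _; rewrite mulr_sign.
case: ifP => _; rewrite ?size_polyN; apply: leq_trans (size_poly_prod_leq _ _) _;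
  rewrite cardE size_enum_ord /=;
  (have hh : (\sum_i size (Q i ((s : {perm 'I_n}) i)) <= n * k.+1)%N by
    rewrite -[n in (_ <= n * _)%N]card_ord -sum_nat_const;
    apply: leq_sum => i _; exact: hQ); by rewrite leq_subLR addn1 addnS ltnS -mulnS.
Qed.

Theorem lemma7 (T nu Mt d : nat) (F : finFieldType)
  (hF : #|F| = (2 ^ T)%N) (hMt : (1 <= Mt)%N) (hT : ((nu.+1) * Mt < T)%N)
  (alpha : F) (halpha : (2 ^ T - 1)%N.-primitive_root alpha)
  (c : 'cV[F]_Mt)
  (delta : 'I_d -> 'I_Mt -> 'I_nu.+1 -> 'F_2)
  (hG : forall i : 'I_d, gvec alpha (delta i) *m c = 0)
  (hPhi : row_free (\matrix_(i < d) Phi (delta i))) :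
  row_free (\matrix_(i < d) gvec alpha (delta i)).
Proof.
have h2 : 2 \in [pchar F] by apply: (card_finPcharP hF).
set Pm := \matrix_(i < d) Phi (delta i) in hPhi.
set G := \matrix_(i < d) gvec alpha (delta i).
have rf : row_full Pm^T by rewrite /row_full mxrank_tr.
have hd : (d <= Mt)%N.
  by move: hPhi => /eqP <-; apply: rank_leq_col.
set f := fullrankfun rf.
have U := fullrowsub_unit rf.
pose Q : 'M[{poly 'F_2}]_d :=
  \matrix_(i, j) \sum_(t < nu.+1) (delta i (f j) t)%:P * 'X^t.
set D := \det Q.
have D0 : D`_0 != 0.
  rewrite -horner_coef0 /D -[_.[0]]/(horner_eval 0 _) -det_map_mx.
  have -> : map_mx (horner_eval 0) Q = (rowsub f Pm^T)^T.
    apply/matrixP => i j; rewrite !mxE horner_evalE horner_sum big_ord_recl big1.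
      by rewrite hornerM hornerC hornerXn expr0 mulr1 addr0.
    by move=> t _; rewrite hornerM hornerXn expr0n /= mulr0.
  by rewrite det_tr -unitfE -unitmxE.
have Dn0 : D != 0 by apply: contraNneq D0 => ->; rewrite coef0.
have sD : (size D <= d * nu + 1)%N.
  apply: size_det_bound => i j; rewrite mxE.
  apply: leq_trans (size_sum _ _ _) _; apply/bigmax_leqP => t _.
  by rewrite mul_polyC (leq_trans (size_scale_leq _ _)) // size_polyXn.
have eD : (map_poly (phi2 h2) D).[alpha] = \det (colsub f G).
  rewrite /D -[(_).[alpha]]/(horner_eval alpha _) -det_map_mx -det_map_mx.
  congr (\det _); apply/matrixP => i j; rewrite !mxE /=; rewrite [LHS](horner_evalE alpha) rmorph_sum horner_sum.
  rewrite /gamma_elt; apply: eq_bigr => t _.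
  by rewrite rmorphM /= map_polyC map_polyXn hornerM hornerC hornerXn.
have dG : \det (colsub f G) != 0.
  apply/eqP => e; have := no_small_root halpha Dn0 (etrans eD e).
  have hm : (d * nu <= Mt * nu)%N by rewrite leq_mul2r hd orbT.
  move: sD hm hT; rewrite mulSn; move=> a b c0 e2; have := leq_trans e2 a; move: b c0; rewrite (mulnC nu Mt); lia.
have : row_free (colsub f G) by rewrite row_free_unit unitmxE unitfE.
move/eqP => rk; rewrite /row_free eqn_leq rank_leq_row /= -{1}rk.
have -> : colsub f G = G *m colsub f 1%:M by rewrite mulmx_colsub mulmx1.
exact: mxrankM_maxl.
Qed.
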